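(* Let $\mathbf{x_0}=(x_1,\dots,x_m)\in \mathbb{R}^m$ and let $m_1,\dots,m_n\in\mathbb{N}$ with $m=\sum_{i=1}^n m_i$. Set $s_0=0$ and $s_k=\sum_{i=1}^k m_i$ for $1\le k\le n$. Let $p,p_1,\dots,p_n\in(1,\infty)$ with conjugate exponents $q,q_1,\dots,q_n$ (i.e. $1/p+1/q=1$, $1/p_k+1/q_k=1$). Let $\mathbf{a}=(a_1,\dots,a_m)\in \mathbb{R}^m\setminus \{\theta\}$ and $W=\{(z_1,\dots,z_m)\in \mathbb{R}^m: \sum_{i=1}^m a_iz_i=0\}$. Then for all $(b_1,\dots,b_m)\in W\setminus \{\theta\}$ and all $\lambda \in \mathbb{R}$, $$\Bigg(\sum_{k=1}^n\Big(\sum_{j=s_{k-1}+1}^{s_k}|x_j-\lambda a_j|^{p_k}\Big)^{p/p_k}\Bigg)^{1/p}\Bigg(\sum_{k=1}^n\Big(\sum_{j=s_{k-1}+1}^{s_k}|b_j|^{q_k}\Big)^{q/q_k}\Bigg)^{1/q}\ge \Big| \sum_{j=1}^m x_jb_j\Big|.$$ Moreover, the inequality is optimal: if $W\neq\{\theta\}$, then the minimum over $\lambda\in\mathbb{R}$ of the first factor equals the maximum over $(b_1,\dots,b_m)\in W\setminus\{\theta\}$ of $\big|\sum_j x_jb_j\big|$ divided by the second factor.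
   Context: $\theta$ denotes the zero vector of $\mathbb{R}^m$. *)

(* Defs.v *)
From HB Require Import structures.
From mathcomp Require Import all_boot all_order all_algebra.
From mathcomp Require Import all_classical all_reals all_analysis.
Set Implicit Arguments. Unset Strict Implicit. Unset Printing Implicit Defensive.
Import Order.TTheory GRing.Theory Num.Theory.
Local Open Scope ring_scope.

(* s_k = m_1 + ... + m_k  (blocks indexed 0..n-1, so block k consists of the
   0-based indices j with s_k <= j < s_{k+1}) *)
Definition sidx (n : nat) (ms : 'I_n -> nat) (k : nat) : nat :=
  (\sum_(i < n | (i < k)%N) ms i)%N.

Definition mixnorm (R : realType) (n m : nat) (ms : 'I_n -> nat)
  (p : R) (ps : 'I_n -> R) (v : 'rV[R]_m) : R :=
  (\sum_(k < n)
     (\sum_(j < m | (sidx ms k <= j < sidx ms k.+1)%N) `|v ord0 j| `^ ps k)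
       `^ (p / ps k)) `^ p^-1.

Definition dotv (R : realType) (m : nat) (u v : 'rV[R]_m) : R :=
  \sum_(j < m) u ord0 j * v ord0 j.

(* Main.v *)
Require Import Defs.
From HB Require Import structures.
From mathcomp Require Import all_boot all_order all_algebra.
From mathcomp Require Import all_classical all_reals all_analysis.
From mathcomp Require Import ring lra.
Import Order.TTheory GRing.Theory Num.Theory.
Import numFieldNormedType.Exports.
Local Open Scope classical_set_scope.
Local Open Scope ring_scope.
Set Implicit Arguments. Unset Strict Implicit. Unset Printing Implicit Defensive.


Section Blocks.
Variables (R : realType) (n m : nat) (ms : 'I_n -> nat).
Hypothesis hm : m = (\sum_(i < n) ms i)%N.

Definition inb (k : 'I_n) (j : 'I_m) : bool := (sidx ms k <= j < sidx ms k.+1)%N.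

Lemma sidx_mono k k' : (k <= k')%N -> (sidx ms k <= sidx ms k')%N.
Proof.
move=> kk; rewrite /sidx [X in (_ <= X)%N]big_mkcond [X in (X <= _)%N]big_mkcond /=.
apply: leq_sum => i _; case: ifP => // ik; rewrite (leq_trans ik kk) //.
Qed.

Lemma sidx0 : sidx ms 0 = 0%N.
Proof. by rewrite /sidx big_pred0. Qed.

Lemma sidxn : sidx ms n = m.
Proof. by rewrite /sidx hm; apply: eq_bigl => i; rewrite ltn_ord. Qed.

Lemma inb_ex (j : 'I_m) : exists k, inb k j.
Proof.
suff : forall N, (N <= n)%N -> (j < sidx ms N)%N -> exists k : 'I_n, inb k j.
  by move=> /(_ n (leqnn n)); apply; rewrite sidxn ltn_ord.
elim=> [|N IH] Nn; first by rewrite sidx0.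
case: (ltnP j (sidx ms N)) => jN jN1; first exact: IH (ltnW Nn) jN.
by exists (Ordinal Nn); rewrite /inb /= jN jN1.
Qed.

Lemma inb_uniq k k' j : inb k j -> inb k' j -> k = k'.
Proof.
rewrite /inb => /andP[a1 a2] /andP[b1 b2]; apply: val_inj => /=.
case: (ltngtP k k') => // h.
- have h' := sidx_mono h.
  by have := leq_trans (leq_trans a2 h') b1; rewrite ltnn.
- have h' := sidx_mono h.
  by have := leq_trans (leq_trans b2 h') a1; rewrite ltnn.
Qed.

Lemma sum_blocks (F : 'I_m -> R) :
  \sum_j F j = \sum_k \sum_(j | inb k j) F j.
Proof.
under [RHS]eq_bigr do rewrite big_mkcond /=.
rewrite exchange_big /=; apply: eq_bigr => j _.
have [k kj] := inb_ex j.
rewrite (bigD1 k) //= kj big1 ?addr0 // => k'; rewrite ?andTb => k'k.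
by case: ifP => // /inb_uniq /(_ kj) e; rewrite e eqxx in k'k.
Qed.

Lemma sum_in_block (G : 'I_n -> R) (j : 'I_m) k : inb k j ->
  \sum_k' (if inb k' j then G k' else 0) = G k.
Proof.
move=> kj; rewrite (bigD1 k) //= kj big1 ?addr0 // => k' k'k.
by case: ifP => // /inb_uniq /(_ kj) e; rewrite e eqxx in k'k.
Qed.
End Blocks.


Section Holder.
Variable R : realType.

Lemma powR_invx (x r : R) : 0 <= x -> x^-1 `^ r = (x `^ r)^-1.
Proof.
move=> x0; rewrite -powR_inv1 // -powRrM mulrC powRrM powR_inv1 //.
exact: powR_ge0.
Qed.

Lemma powR_Vp (A p : R) : 0 <= A -> p != 0 -> (A `^ p^-1) `^ p = A.
Proof. by move=> A0 p0; rewrite -powRrM mulVf // powRr1. Qed.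

Lemma conj_gt0 (p q : R) : 1 < p -> p^-1 + q^-1 = 1 -> 0 < q.
Proof.
move=> p1 hq; have : q^-1 = 1 - p^-1 by rewrite -hq addrAC subrr add0r.
have : p^-1 < 1 by rewrite invf_lt1 // (lt_trans ltr01).
move=> pl qe; rewrite -invr_gt0 qe subr_gt0 //.
Qed.

Lemma powR_div (x y r : R) : 0 <= x -> 0 <= y -> (x / y) `^ r = x `^ r / y `^ r.
Proof.
move=> x0 y0; rewrite powRM ?invr_ge0 // powR_invx //.
Qed.

Lemma young_scaled (u v A B p q : R) : 0 <= u -> 0 <= v -> 0 <= A -> 0 <= B ->
  A != 0 -> B != 0 -> 0 < p -> 0 < q -> p^-1 + q^-1 = 1 ->
  u * v <= A `^ p^-1 * B `^ q^-1 * ((u `^ p / A) / p + (v `^ q / B) / q).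
Proof.
move=> u0 v0 A0 B0 Ap Bp p0 q0 hq.
have alp : 0 < A `^ p^-1 by apply: powR_gt0; rewrite lt_def Ap.
have bep : 0 < B `^ q^-1 by apply: powR_gt0; rewrite lt_def Bp.
have := @conjugate_powR R (u / A `^ p^-1) (v / B `^ q^-1) p q
    (divr_ge0 u0 (ltW alp)) (divr_ge0 v0 (ltW bep)) p0 q0 hq.
rewrite powR_div // ?(ltW alp) // powR_div // ?(ltW bep) //.
rewrite powR_Vp ?gt_eqF // powR_Vp ?gt_eqF // => h.
have -> : u * v = A `^ p^-1 * B `^ q^-1 * (u / A `^ p^-1 * (v / B `^ q^-1)).
  by field; rewrite !gt_eqF.
by rewrite ler_pM2l ?mulr_gt0.
Qed.

Lemma holder_sum (I : finType) (P : pred I) (f g : I -> R) (p q : R) :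
  1 < p -> p^-1 + q^-1 = 1 -> (forall i, 0 <= f i) -> (forall i, 0 <= g i) ->
  \sum_(i | P i) f i * g i <=
  (\sum_(i | P i) f i `^ p) `^ p^-1 * (\sum_(i | P i) g i `^ q) `^ q^-1.
Proof.
move=> p1 hq f0 g0.
have p0 : 0 < p by apply: lt_trans p1.
have q0 : 0 < q := conj_gt0 p1 hq.
set A := \sum_(i | P i) f i `^ p; set B := \sum_(i | P i) g i `^ q.
have A0 : 0 <= A by apply: sumr_ge0 => i _; exact: powR_ge0.
have B0 : 0 <= B by apply: sumr_ge0 => i _; exact: powR_ge0.
have RHS0 : 0 <= A `^ p^-1 * B `^ q^-1 by rewrite mulr_ge0 // powR_ge0.
have [Ae|Ap] := eqVneq A 0.
  have : forall i, P i -> f i = 0.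
    move=> i Pi; apply: (@powR_eq0_eq0 _ _ p).
    by apply: (psumr_eq0P _ Ae) => // j _; exact: powR_ge0.
  move=> fz; rewrite big1 // => i Pi; by rewrite fz // mul0r.
have [Be|Bp] := eqVneq B 0.
  have : forall i, P i -> g i = 0.
    move=> i Pi; apply: (@powR_eq0_eq0 _ _ q).
    by apply: (psumr_eq0P _ Be) => // j _; exact: powR_ge0.
  move=> gz; rewrite big1 // => i Pi; by rewrite gz // mulr0.
have Ag : 0 < A by rewrite lt_def Ap A0.
have Bg : 0 < B by rewrite lt_def Bp B0.
set al := A `^ p^-1; set be := B `^ q^-1.
have alp : 0 < al by apply: powR_gt0.
have bep : 0 < be by apply: powR_gt0.
have key : forall i, f i * g i <= al * be * ((f i `^ p / A) / p + (g i `^ q / B) / q).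
  move=> i.
  exact: (young_scaled (f0 i) (g0 i) A0 B0 Ap Bp p0 q0 hq).
apply: le_trans (ler_sum _ (fun i _ => key i)) _.
rewrite -mulr_sumr big_split /= -!mulr_suml -/A -/B !mulfV ?gt_eqF //.
by rewrite !mul1r hq mulr1.
Qed.
End Holder.


Section Anal.
Variable R : realType.

Lemma cvg_sumf (I : Type) (r : seq I) (P : pred I) (F : I -> R -> R) (l0 : R) :
  (forall i, F i l @[l --> l0] --> F i l0) ->
  \sum_(i <- r | P i) F i l @[l --> l0] --> \sum_(i <- r | P i) F i l0.
Proof.
move=> h; elim: r => [|i r IH].
  have -> : (fun l => \sum_(i <- [::] | P i) F i l) = (fun=> 0).
    by apply: funext => l; rewrite big_nil.
  by rewrite big_nil; exact: cvg_cst.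
have -> : (fun l => \sum_(j <- i :: r | P j) F j l) =
  (fun l => if P i then F i l + \sum_(j <- r | P j) F j l else \sum_(j <- r | P j) F j l).
  by apply: funext => l; rewrite big_cons.
rewrite big_cons; case: (P i) => //; exact: cvgD.
Qed.

Lemma cvg_powR_pos (r a0 : R) : 0 < a0 -> a `^ r @[a --> a0] --> a0 `^ r.
Proof.
move=> a0p.
have E : {near a0, (fun a => expR (r * ln a)) =1 (fun a => a `^ r)}.
  by near=> a; rewrite /powR gt_eqF //; near: a; exact: lt_nbhsr.
apply: cvg_trans (near_eq_cvg E) _.
rewrite /powR gt_eqF //.
apply: (cvg_comp (fun a => r * ln a) expR); last exact: continuous_expR.
by apply: cvgM; [exact: cvg_cst | exact: continuous_ln].
Unshelve. all: end_near.
Qed.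

Lemma powR_Vp' (A p : R) : 0 <= A -> p != 0 -> (A `^ p^-1) `^ p = A.
Proof. by move=> A0 p0; rewrite -powRrM mulVf // powRr1. Qed.

Lemma cvg_absR (r y0 : R) : 0 < r -> `|y| `^ r @[y --> y0] --> `|y0| `^ r.
Proof.
move=> r0; have [->|y0n] := eqVneq y0 0.
  rewrite normr0 powR0 ?gt_eqF //.
  apply/cvgrPdist_lt => e e0.
  have d0 : 0 < e `^ r^-1 by apply: powR_gt0.
  near=> y.
  have yd : `|y| < e `^ r^-1.
    near: y.
    by exists (e `^ r^-1) => // t; rewrite /ball_ /= sub0r normrN.
  rewrite sub0r normrN ger0_norm ?powR_ge0 //.
  rewrite -[X in _ < X](powR_Vp' (ltW e0) (lt0r_neq0 r0)).
  by apply: gt0_ltr_powR => //; rewrite ?nnegrE ?powR_ge0.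
apply: (@cvg_comp _ _ _ (fun y => `|y|) (fun a => a `^ r) _ (nbhs `|y0|)).
  by apply: cvg_norm; exact: cvg_id.
by apply: cvg_powR_pos; rewrite normr_gt0.
Unshelve. all: end_near.
Qed.

Lemma cvg_bound0 (f g : R -> R) (l0 : R) : (forall l, `|f l| <= g l) ->
  g l @[l --> l0] --> 0 -> f l @[l --> l0] --> 0.
Proof.
move=> fg g0; apply/norm_cvg0P.
apply: (@squeeze_cvgr _ _ _ _ (fun=> 0) g) => //; last exact: cvg_cst.
by near=> l; rewrite normr_ge0 fg.
Unshelve. all: end_near.
Qed.

Definition sp (r u : R) := Num.sg u * `|u| `^ r.

Lemma cvg_sp (r u0 : R) : 0 < r -> sp r u @[u --> u0] --> sp r u0.
Proof.
move=> r0; have [->|u0n] := eqVneq u0 0.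
  rewrite /sp sgr0 mul0r.
  apply: (@cvg_bound0 _ (fun u => `|u| `^ r)).
    move=> u; rewrite normrM normr_sg ger0_norm ?powR_ge0 //.
    by case: (u != 0); rewrite ?mul1r ?mul0r ?powR_ge0.
  by have := @cvg_absR r 0 r0; rewrite normr0 powR0 ?gt_eqF.
rewrite /sp; apply: cvgM; last exact: cvg_absR.
have E : {near u0, (fun=> Num.sg u0) =1 (fun u => Num.sg u)}.
  case: (ltgtP u0 0) => [u0n'|u0p|]; last by move/eqP: u0n.
  - near=> u; rewrite !ltr0_sg //; near: u; exact: lt_nbhsl.
  - near=> u; rewrite !gtr0_sg //; near: u; exact: lt_nbhsr.
apply: cvg_trans (near_eq_cvg E) _; exact: cvg_cst.
Unshelve. all: end_near.
Qed.

Lemma bound_T (S y p ps : R) : 1 < p -> 1 < ps -> 0 <= S -> `|y| `^ ps <= S ->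
  `|sp (ps - 1) y * S `^ (p / ps - 1)| <= S `^ ((p - 1) / ps).
Proof.
move=> hp hps S0 yS.
have ps0 : 0 < ps by apply: lt_trans hps.
rewrite /sp !normrM normr_sg (ger0_norm (powR_ge0 _ _)) (ger0_norm (powR_ge0 _ _)).
have ps1 : ps - 1 != 0 by rewrite subr_eq0 gt_eqF.
have [->|yn] := eqVneq y 0; first by rewrite normr0 (powR0 ps1) mulr0 mul0r powR_ge0.
rewrite /= mul1r.
have Sp : 0 < S.
  apply: lt_le_trans yS; apply: powR_gt0; by rewrite normr_gt0.
have yle : `|y| <= S `^ ps^-1.
  have ips : 0 <= ps^-1 by rewrite invr_ge0 (ltW ps0).
  have := @ge0_ler_powR R ps^-1 ips (`|y| `^ ps) S.
  rewrite !nnegrE powR_ge0 (ltW Sp) => /(_ isT isT yS).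
  by rewrite -powRrM mulfV ?gt_eqF // powRr1.
have yle2 : `|y| `^ (ps - 1) <= S `^ (ps^-1 * (ps - 1)).
  rewrite powRrM; apply: ge0_ler_powR; rewrite ?nnegrE ?powR_ge0 //.
  by rewrite subr_ge0 ltW.
apply: le_trans (ler_wpM2r (powR_ge0 _ _) yle2) _.
rewrite -powRD; last by rewrite (gt_eqF Sp) implybT.
rewrite le_eqVlt; apply/orP; left; apply/eqP; congr (_ `^ _).
by field; rewrite gt_eqF.
Qed.

End Anal.


Lemma conj_eq (R : realType) (p q : R) : 1 < p -> p^-1 + q^-1 = 1 -> q = p / (p - 1).
Proof.
move=> p1 hq.
have p0 : p != 0 by rewrite gt_eqF // (lt_trans ltr01).
have p10 : p - 1 != 0 by rewrite subr_eq0 gt_eqF.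
have : q^-1 = (p - 1) / p by rewrite -[RHS]mulrC mulrBr mulVf // mulr1 -hq addrAC subrr add0r.
by move=> /(congr1 GRing.inv); rewrite invrK invf_div.
Qed.

Section Mix.
Variables (R : realType) (n m : nat) (ms : 'I_n -> nat).
Hypothesis hm : m = (\sum_(i < n) ms i)%N.

Definition Sb (r : 'I_n -> R) (v : 'rV[R]_m) k :=
  \sum_(j | inb ms k j) `|v ord0 j| `^ r k.

Definition Mx (p : R) (r : 'I_n -> R) (v : 'rV[R]_m) :=
  \sum_k (Sb r v k) `^ (p / r k).

Lemma mixnormE p r (v : 'rV[R]_m) : mixnorm ms p r v = (Mx p r v) `^ p^-1.
Proof. by []. Qed.

Lemma Sb_ge0 r v k : 0 <= Sb r v k.
Proof. by apply: sumr_ge0 => j _; exact: powR_ge0. Qed.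

Lemma Mx_ge0 p r v : 0 <= Mx p r v.
Proof. by apply: sumr_ge0 => j _; exact: powR_ge0. Qed.

Lemma mixnorm_ge0 p r (v : 'rV[R]_m) : 0 <= mixnorm ms p r v.
Proof. exact: powR_ge0. Qed.

Lemma mix_holder (p q : R) (ps qs : 'I_n -> R) (u b : 'rV[R]_m) :
  1 < p -> p^-1 + q^-1 = 1 ->
  (forall k, 1 < ps k) -> (forall k, (ps k)^-1 + (qs k)^-1 = 1) ->
  `|dotv u b| <= mixnorm ms p ps u * mixnorm ms q qs b.
Proof.
move=> hp hq hps hqs.
rewrite /dotv; apply: le_trans (ler_norm_sum _ _ _) _.
under eq_bigr do rewrite normrM.
rewrite (sum_blocks hm).
apply: (@le_trans _ _ (\sum_k (Sb ps u k) `^ (ps k)^-1 * (Sb qs b k) `^ (qs k)^-1)).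
  apply: ler_sum => k _.
  exact: (@holder_sum _ _ (inb ms k) (fun j => `|u ord0 j|) (fun j => `|b ord0 j|) _ _ (hps k) (hqs k) (fun j => normr_ge0 _) (fun j => normr_ge0 _)).
have E1 : \sum_(i | xpredT i) (Sb ps u i `^ (ps i)^-1) `^ p = Mx p ps u.
  by apply: eq_bigr => k _; rewrite -powRrM mulrC.
have E2 : \sum_(i | xpredT i) (Sb qs b i `^ (qs i)^-1) `^ q = Mx q qs b.
  by apply: eq_bigr => k _; rewrite -powRrM mulrC.
have H2 : \sum_k Sb ps u k `^ (ps k)^-1 * Sb qs b k `^ (qs k)^-1 <=
    (Mx p ps u) `^ p^-1 * (Mx q qs b) `^ q^-1.
  rewrite -E1 -E2.
  exact: (@holder_sum _ _ xpredT (fun k => (Sb ps u k) `^ (ps k)^-1) (fun k => (Sb qs b k) `^ (qs k)^-1) _ _ hp hq (fun k => powR_ge0 _ _) (fun k => powR_ge0 _ _)).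
by rewrite !mixnormE.
Qed.


Lemma mixnorm0 p r : (forall k, r k != 0) -> p != 0 -> mixnorm ms p r (0 : 'rV[R]_m) = 0.
Proof.
move=> r0 p0; rewrite mixnormE /Mx big1 ?powR0 ?invr_eq0 // => k _.
rewrite /Sb big1 ?powR0 // => [|j _]; last by rewrite mxE normr0 powR0.
by rewrite mulf_neq0 // invr_eq0.
Qed.

Lemma dotv_subZ (u v b : 'rV[R]_m) l : dotv (u - l *: v) b = dotv u b - l * dotv v b.
Proof.
rewrite /dotv mulr_sumr -sumrB; apply: eq_bigr => j _; rewrite !mxE; ring.
Qed.

Variables (p q : R) (ps qs : 'I_n -> R).
Hypotheses (hp : 1 < p) (hq : p^-1 + q^-1 = 1).
Hypotheses (hps : forall k, 1 < ps k) (hqs : forall k, (ps k)^-1 + (qs k)^-1 = 1).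

Let p0 : 0 < p. Proof. exact: lt_trans hp. Qed.
Let ps0 k : 0 < ps k. Proof. exact: lt_trans (hps k). Qed.
Let ps1 k : ps k - 1 != 0. Proof. by rewrite subr_eq0 gt_eqF. Qed.
Let ps1p k : 0 < ps k - 1. Proof. by rewrite subr_gt0. Qed.
Let p1 : p - 1 != 0. Proof. by rewrite subr_eq0 gt_eqF. Qed.
Let p_ne0 : p != 0. Proof. exact: lt0r_neq0. Qed.
Let ps_ne0 k : ps k != 0. Proof. exact: lt0r_neq0. Qed.
Let q0 : 0 < q. Proof. exact: conj_gt0 hp hq. Qed.
Let qs0 k : 0 < qs k. Proof. exact: conj_gt0 (hps k) (hqs k). Qed.

Lemma iden1 k : (ps k - 1) * qs k = ps k.
Proof.
rewrite (conj_eq (hps k) (hqs k)); field; by do ?split; rewrite ?ps1 ?p1 ?ps_ne0 ?p_ne0.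
Qed.

Lemma iden2 k : 1 + (p / ps k - 1) * qs k = (p - 1) / (ps k - 1).
Proof.
rewrite (conj_eq (hps k) (hqs k)); field; by do ?split; rewrite ?ps1 ?p1 ?ps_ne0 ?p_ne0.
Qed.

Lemma iden3 k : (1 + (p / ps k - 1) * qs k) * (q / qs k) = p / ps k.
Proof.
rewrite iden2 (conj_eq hp hq) (conj_eq (hps k) (hqs k)); field.
by do ?split; rewrite ?ps1 ?p1 ?ps_ne0 ?p_ne0.
Qed.

Lemma iden2_ne0 k : 1 + (p / ps k - 1) * qs k != 0.
Proof. by rewrite iden2 gt_eqF // divr_gt0 // subr_gt0. Qed.


Definition beta (v : 'rV[R]_m) : 'rV[R]_m :=
  \row_j \sum_k (if inb ms k j then
     sp (ps k - 1) (v ord0 j) * (Sb ps v k) `^ (p / ps k - 1) else 0).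

Lemma betaE v j k : inb ms k j ->
  beta v ord0 j = sp (ps k - 1) (v ord0 j) * (Sb ps v k) `^ (p / ps k - 1).
Proof. by move=> kj; rewrite mxE (sum_in_block _ kj). Qed.

Lemma abs_beta v j k : inb ms k j ->
  `|beta v ord0 j| = `|v ord0 j| `^ (ps k - 1) * (Sb ps v k) `^ (p / ps k - 1).
Proof.
move=> kj; rewrite (betaE v kj) /sp !normrM normr_sg.
rewrite (ger0_norm (powR_ge0 _ _)) (ger0_norm (powR_ge0 _ _)).
have [->|nz] := eqVneq (v ord0 j) 0; last by rewrite mul1r.
by rewrite normr0 powR0 ?ps1 // mulr0 !mul0r.
Qed.

Lemma dot_beta v : dotv v (beta v) = Mx p ps v.
Proof.
rewrite /dotv (sum_blocks hm) /Mx; apply: eq_bigr => k _.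
have -> : \sum_(j | inb ms k j) v ord0 j * beta v ord0 j =
          Sb ps v k * (Sb ps v k) `^ (p / ps k - 1).
  rewrite /Sb mulr_suml; apply: eq_bigr => j kj.
  by rewrite (betaE v kj) /sp mulrA mulrA (mulrC (v ord0 j)) -normrEsg (mulr_powRB1 (normr_ge0 _) (ps0 k)).
rewrite -{1}(powRr1 (Sb_ge0 ps v k)) -powRD; first by rewrite addrC subrK.
by rewrite addrC subrK mulf_eq0 invr_eq0 (negbTE p_ne0) (negbTE (ps_ne0 k)).
Qed.

Lemma Sb_beta v k : Sb qs (beta v) k = (Sb ps v k) `^ (1 + (p / ps k - 1) * qs k).
Proof.
transitivity (\sum_(j | inb ms k j) `|v ord0 j| `^ ps k * (Sb ps v k) `^ ((p / ps k - 1) * qs k)).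
  apply: eq_bigr => j kj; rewrite (abs_beta v kj) powRM ?powR_ge0 //.
  by rewrite -!powRrM iden1.
rewrite -mulr_suml -/(Sb ps v k) powRD ?powRr1 ?Sb_ge0 //.
by rewrite (negbTE (iden2_ne0 k)).
Qed.

Lemma Mx_beta v : Mx q qs (beta v) = Mx p ps v.
Proof. by rewrite /Mx; apply: eq_bigr => k _; rewrite Sb_beta -powRrM iden3. Qed.

Lemma mixnorm_beta v : mixnorm ms q qs (beta v) = (Mx p ps v) `^ q^-1.
Proof. by rewrite mixnormE Mx_beta. Qed.

Lemma dot_beta_eq v : dotv v (beta v) = mixnorm ms p ps v * mixnorm ms q qs (beta v).
Proof.
rewrite dot_beta mixnorm_beta mixnormE -powRD; last by rewrite hq oner_eq0.
by rewrite hq powRr1 // Mx_ge0.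
Qed.

Lemma mixnorm_beta_gt0 v : 0 < mixnorm ms p ps v -> 0 < mixnorm ms q qs (beta v).
Proof.
rewrite mixnorm_beta mixnormE => h; apply: powR_gt0.
rewrite lt_def Mx_ge0 andbT; apply/eqP => M0; move: h.
by rewrite M0 powR0 ?ltxx // invr_eq0 gt_eqF.
Qed.

Lemma mixnorm_gt0 (v : 'rV[R]_m) : v != 0 -> 0 < mixnorm ms p ps v.
Proof.
move=> vn.
have [j vj] : exists j, v ord0 j != 0.
  case: (pickP (fun j => v ord0 j != 0)) => [j vj|H]; first by exists j.
  move: vn; rewrite (_ : v = 0) ?eqxx //; apply/rowP => j.
  by rewrite !mxE; move: (H j) => /negbFE/eqP.
have [k kj] := inb_ex hm j.
have Sp : 0 < Sb ps v k.
  rewrite /Sb (bigD1 j) //=.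
  apply: (@lt_le_trans _ _ (`|v ord0 j| `^ ps k)); first by rewrite powR_gt0 // normr_gt0.
  by rewrite lerDl sumr_ge0 // => i _; exact: powR_ge0.
rewrite mixnormE; apply: powR_gt0; rewrite /Mx (bigD1 k) //=.
apply: (@lt_le_trans _ _ ((Sb ps v k) `^ (p / ps k))); first by rewrite powR_gt0.
by rewrite lerDl sumr_ge0 // => i _; exact: powR_ge0.
Qed.


Variables (x a : 'rV[R]_m).

Definition U j l := (x - l *: a) ord0 j.
Definition Sl k l := Sb ps (x - l *: a) k.
Definition T k j l := sp (ps k - 1) (U j l) * (Sl k l) `^ (p / ps k - 1).
Definition hf l := dotv a (beta (x - l *: a)).

Lemma beta_entry v j : beta v ord0 j = \sum_k (if inb ms k j then
     sp (ps k - 1) (v ord0 j) * (Sb ps v k) `^ (p / ps k - 1) else 0).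
Proof. by rewrite mxE. Qed.

Lemma hfE l : hf l = \sum_j a ord0 j * \sum_k (if inb ms k j then T k j l else 0).
Proof.
rewrite /hf /dotv; apply: eq_bigr => j _; rewrite beta_entry /T /U /Sl.
reflexivity.
Qed.

Lemma cvg_U j l0 : U j l @[l --> l0] --> U j l0.
Proof.
have -> : U j = (fun l => x ord0 j - l * a ord0 j).
  by apply: funext => l; rewrite /U !mxE.
apply: cvgB; first exact: cvg_cst.
by apply: cvgM; [exact: cvg_id | exact: cvg_cst].
Qed.

Lemma cvg_Sl k l0 : Sl k l @[l --> l0] --> Sl k l0.
Proof.
rewrite /Sl /Sb; apply: (@cvg_sumf _ _ _ _ (fun i l => `|U i l| `^ ps k)) => i.
apply: (@cvg_comp _ _ _ (U i) (fun y => `|y| `^ ps k) _ (nbhs (U i l0))).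
  exact: cvg_U.
exact: cvg_absR (ps0 k).
Qed.

Lemma Sl_ge0 k l : 0 <= Sl k l.
Proof. by apply: sumr_ge0 => i _; exact: powR_ge0. Qed.

Lemma cvg_T k j l0 : inb ms k j -> T k j l @[l --> l0] --> T k j l0.
Proof.
move=> kj.
have UleS l : `|U j l| `^ ps k <= Sl k l.
  rewrite /Sl /Sb (bigD1 j) //= lerDl; apply: sumr_ge0 => i _; exact: powR_ge0.
have [S0|Sp] := eqVneq (Sl k l0) 0.
  have U0 : U j l0 = 0.
    apply/normr0_eq0/(@powR_eq0_eq0 _ _ (ps k)).
    by apply/eqP; rewrite eq_le powR_ge0 andbT -S0 UleS.
  have T0 : T k j l0 = 0 by rewrite /T U0 /sp sgr0 !mul0r.
  rewrite T0.
  have c0 : 0 < (p - 1) / ps k by rewrite divr_gt0 // subr_gt0.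
  apply: (@cvg_bound0 _ _ (fun l => `|Sl k l| `^ ((p - 1) / ps k))).
    move=> l; rewrite (ger0_norm (Sl_ge0 k l)) /T; exact: (bound_T hp (hps k) (Sl_ge0 k l) (UleS l)).
  have := @cvg_comp _ _ _ (Sl k) (fun y => `|y| `^ ((p - 1) / ps k)) _ (nbhs (Sl k l0)) _
    (@cvg_Sl k l0) (@cvg_absR _ _ (Sl k l0) c0).
  by rewrite S0 normr0 powR0 ?gt_eqF.
rewrite /T; apply: cvgM.
  apply: (@cvg_comp _ _ _ (U j) (sp (ps k - 1)) _ (nbhs (U j l0))).
    exact: cvg_U.
  exact: cvg_sp (ps1p k).
apply: (@cvg_comp _ _ _ (Sl k) (fun y => y `^ (p / ps k - 1)) _ (nbhs (Sl k l0))).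
  exact: cvg_Sl.
by apply: cvg_powR_pos; rewrite lt_def Sp Sl_ge0.
Qed.

Lemma cont_hf : continuous hf.
Proof.
move=> l0.
have -> : hf = (fun l => \sum_j a ord0 j * \sum_k (if inb ms k j then T k j l else 0)).
  by apply: funext => l; exact: hfE.
apply: (@cvg_sumf _ _ _ _ (fun j l => a ord0 j * \sum_k (if inb ms k j then T k j l else 0))) => j.
apply: cvgM; first exact: cvg_cst.
apply: (@cvg_sumf _ _ _ _ (fun k l => if inb ms k j then T k j l else 0)) => k.
by case kj: (inb ms k j); [exact: cvg_T | exact: cvg_cst].
Qed.

Lemma HH (u b : 'rV[R]_m) : `|dotv u b| <= mixnorm ms p ps u * mixnorm ms q qs b.
Proof. exact: (@mix_holder p q ps qs u b hp hq hps hqs). Qed.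

Lemma K1 l : mixnorm ms p ps x < mixnorm ms p ps (x - l *: a) -> l * hf l < 0.
Proof.
move=> hl.
have Np : 0 < mixnorm ms p ps (x - l *: a) := le_lt_trans (mixnorm_ge0 _ _ _) hl.
have Kp := mixnorm_beta_gt0 Np.
have -> : l * hf l = dotv x (beta (x - l *: a)) - dotv (x - l *: a) (beta (x - l *: a)).
  by rewrite /hf dotv_subZ; ring.
rewrite dot_beta_eq subr_lt0.
apply: le_lt_trans (le_trans (ler_norm _) (HH x (beta (x - l *: a)))) _.
rewrite (ltr_pM2r Kp); exact: hl.
Qed.

Lemma tiny (c Q P : R) : c + Q + 1 <= P -> Q < P - c.
Proof. move=> h; lra. Qed.

Lemma coerc l : a != 0 ->
  `|dotv x (beta a)| + mixnorm ms p ps x * mixnorm ms q qs (beta a) + 1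
    <= `|l| * (mixnorm ms p ps a * mixnorm ms q qs (beta a)) ->
  mixnorm ms p ps x < mixnorm ms p ps (x - l *: a).
Proof.
move=> ha hl.
have Ap := mixnorm_gt0 ha.
have Kp := mixnorm_beta_gt0 Ap.
have H := HH (x - l *: a) (beta a).
rewrite dotv_subZ dot_beta_eq in H.
have H2 := lerB_dist (l * (mixnorm ms p ps a * mixnorm ms q qs (beta a))) (dotv x (beta a)).
rewrite distrC normrM (ger0_norm (ltW (mulr_gt0 Ap Kp))) in H2.
rewrite -(ltr_pM2r Kp).
apply: lt_le_trans; last exact: H.
apply: lt_le_trans; last exact: H2.
exact: tiny hl.
Qed.

Lemma part2 : a != 0 -> (exists b : 'rV[R]_m, dotv a b = 0 /\ b != 0) ->
   exists lam0 : R, exists b0 : 'rV[R]_m,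
     [/\ (forall lam : R, mixnorm ms p ps (x - lam0 *: a) <= mixnorm ms p ps (x - lam *: a)),
         dotv a b0 = 0 /\ b0 != 0,
         (forall b : 'rV[R]_m, dotv a b = 0 -> b != 0 ->
            `| dotv x b | / mixnorm ms q qs b <= `| dotv x b0 | / mixnorm ms q qs b0) &
         mixnorm ms p ps (x - lam0 *: a) = `| dotv x b0 | / mixnorm ms q qs b0].
Proof.
move=> ha [b1 [hb1 hb1n]].
have Ap := mixnorm_gt0 ha.
have Kp := mixnorm_beta_gt0 Ap.
pose L := (`|dotv x (beta a)| + mixnorm ms p ps x * mixnorm ms q qs (beta a) + 1) /
          (mixnorm ms p ps a * mixnorm ms q qs (beta a)).
have AKp := mulr_gt0 Ap Kp.
have num0 : 0 < `|dotv x (beta a)| + mixnorm ms p ps x * mixnorm ms q qs (beta a) + 1.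
  apply: ltr_wpDl; last exact: ltr01.
  apply: addr_ge0; first exact: normr_ge0.
  apply: mulr_ge0; exact: mixnorm_ge0.
have Lp : 0 < L := divr_gt0 num0 AKp.
have LAK : `|L| * (mixnorm ms p ps a * mixnorm ms q qs (beta a)) =
   `|dotv x (beta a)| + mixnorm ms p ps x * mixnorm ms q qs (beta a) + 1.
  rewrite (ger0_norm (ltW Lp)) /L (mulfVK (lt0r_neq0 AKp)); reflexivity.
have hL : hf L < 0.
  have hl1 := lexx (`|L| * (mixnorm ms p ps a * mixnorm ms q qs (beta a))).
  rewrite {1}LAK in hl1.
  have := K1 (coerc ha hl1).
  rewrite pmulr_rlt0; [exact: id | exact: Lp].
have LAK' : `|- L| * (mixnorm ms p ps a * mixnorm ms q qs (beta a)) =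
   `|dotv x (beta a)| + mixnorm ms p ps x * mixnorm ms q qs (beta a) + 1.
  rewrite normrN; exact: LAK.
have hmL : 0 < hf (- L).
  have hl1 := lexx (`|- L| * (mixnorm ms p ps a * mixnorm ms q qs (beta a))).
  rewrite {1}LAK' in hl1.
  have := K1 (coerc ha hl1).
  rewrite nmulr_rlt0; [exact: id | rewrite oppr_lt0; exact: Lp].
have cw : {within `[- L, L], continuous hf}.
  apply: continuous_subspaceT; exact: cont_hf.
have LL : - L <= L.
  apply: (@le_trans _ _ (0:R)); last exact: ltW Lp.
  rewrite oppr_le0; exact: ltW Lp.
have mm : Num.min (hf (- L)) (hf L) <= 0 <= Num.max (hf (- L)) (hf L).
  apply/andP; split.
    rewrite ge_min; apply/orP; right; exact: ltW hL.
  rewrite le_max; apply/orP; left; exact: ltW hmL.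
have [lam0 _ h0] := @IVT R hf (- L) L 0 LL cw mm.
move: h0; rewrite /hf => h0.
have dxu : forall b, dotv a b = 0 -> dotv x b = dotv (x - lam0 *: a) b.
  by move=> b hb; rewrite dotv_subZ hb mulr0 subr0.
have ratio_le : forall b, dotv a b = 0 ->
    `|dotv x b| / mixnorm ms q qs b <= mixnorm ms p ps (x - lam0 *: a).
  move=> b hb; rewrite (dxu b hb).
  have [Nb0|Nbn] := eqVneq (mixnorm ms q qs b) 0.
    rewrite Nb0 invr0 mulr0; exact: mixnorm_ge0.
  have Nbp : 0 < mixnorm ms q qs b by rewrite lt_def Nbn mixnorm_ge0.
  rewrite ler_pdivrMr; [exact: HH | exact: Nbp].
have [N0|Nn] := eqVneq (mixnorm ms p ps (x - lam0 *: a)) 0.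
  have rz : forall b, dotv a b = 0 -> `|dotv x b| / mixnorm ms q qs b = 0.
    move=> b hb; apply: le_anti; apply/andP; split.
      rewrite -N0; exact: ratio_le.
    apply: divr_ge0; [exact: normr_ge0 | exact: mixnorm_ge0].
  exists lam0, b1; split.
  - move=> lam; rewrite N0; exact: mixnorm_ge0.
  - exact: (conj hb1 hb1n).
  - move=> b hb _; rewrite (rz b hb) (rz b1 hb1); exact: lexx.
  - rewrite N0 (rz b1 hb1); reflexivity.
have Np : 0 < mixnorm ms p ps (x - lam0 *: a) by rewrite lt_def Nn mixnorm_ge0.
have K0p := mixnorm_beta_gt0 Np.
have b0n : beta (x - lam0 *: a) != 0.
  apply/eqP => e; move: K0p.
  by rewrite e (mixnorm0 (fun k => lt0r_neq0 (qs0 k)) (lt0r_neq0 q0)) ltxx.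
have eqr : `|dotv x (beta (x - lam0 *: a))| / mixnorm ms q qs (beta (x - lam0 *: a)) =
           mixnorm ms p ps (x - lam0 *: a).
  rewrite (dxu _ h0) dot_beta_eq.
  rewrite (ger0_norm (mulr_ge0 (mixnorm_ge0 _ _ _) (mixnorm_ge0 _ _ _))).
  rewrite (mulfK (lt0r_neq0 K0p)); reflexivity.
exists lam0, (beta (x - lam0 *: a)); split.
- move=> lam.
  have e : mixnorm ms p ps (x - lam0 *: a) * mixnorm ms q qs (beta (x - lam0 *: a)) =
           dotv (x - lam *: a) (beta (x - lam0 *: a)).
    by rewrite -dot_beta_eq -(dxu _ h0) dotv_subZ h0 mulr0 subr0.
  have := le_trans (ler_norm _) (HH (x - lam *: a) (beta (x - lam0 *: a))).
  rewrite -e (ler_pM2r K0p); exact: id.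
- exact: (conj h0 b0n).
- move=> b hb _; rewrite eqr; exact: ratio_le.
- rewrite eqr; reflexivity.
Qed.

End Mix.

Theorem theorem5p13 (R : realType) (n m : nat) (ms : 'I_n -> nat)
  (hm : m = (\sum_(i < n) ms i)%N)
  (x a : 'rV[R]_m) (p q : R) (ps qs : 'I_n -> R)
  (hp : 1 < p) (hq : p^-1 + q^-1 = 1)
  (hps : forall k, 1 < ps k) (hqs : forall k, (ps k)^-1 + (qs k)^-1 = 1)
  (ha : a != 0) :
  (forall b : 'rV[R]_m, dotv a b = 0 -> b != 0 -> forall lam : R,
     `| dotv x b | <= mixnorm ms p ps (x - lam *: a) * mixnorm ms q qs b)
  /\
  ((exists b : 'rV[R]_m, dotv a b = 0 /\ b != 0) ->
   exists lam0 : R, exists b0 : 'rV[R]_m,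
     [/\ (forall lam : R, mixnorm ms p ps (x - lam0 *: a) <= mixnorm ms p ps (x - lam *: a)),
         dotv a b0 = 0 /\ b0 != 0,
         (forall b : 'rV[R]_m, dotv a b = 0 -> b != 0 ->
            `| dotv x b | / mixnorm ms q qs b <= `| dotv x b0 | / mixnorm ms q qs b0) &
         mixnorm ms p ps (x - lam0 *: a) = `| dotv x b0 | / mixnorm ms q qs b0]).
Proof.
split.
  move=> b hab _ lam.
  have -> : dotv x b = dotv (x - lam *: a) b by rewrite dotv_subZ hab mulr0 subr0.
  by apply: mix_holder.
by apply: part2.
Qed.
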